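(* Let $H$ be a complex Hilbert space, $A\in B(H)$ a nonzero positive semidefinite operator, and $T\in B_{A^{1/2}}(H)$. Then $T$ is $A$-invertible in $B_{A^{1/2}}(H)$ if and only if there exist operators $S_1,S_2\in B_{A^{1/2}}(H)$ such that $ATS_1=AS_2T=A$.
   Context: $B_{A^{1/2}}(H)=\{X\in B(H): R(X^*A^{1/2})\subset R(A^{1/2})\}$. A nonzero $T\in B_{A^{1/2}}(H)$ is $A$-invertible in $B_{A^{1/2}}(H)$ if there is a nonzero $S\in B_{A^{1/2}}(H)$ with $ATS=AST=A$. *)

(* Defs.v *)
From mathcomp Require Import all_boot all_algebra.
From mathcomp Require Import reals complex.
Import GRing.Theory Num.Theory.
Set Implicit Arguments. Unset Strict Implicit. Unset Printing Implicit Defensive.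
Local Open Scope ring_scope.
Local Open Scope complex_scope.

Record hilbert (R : realType) (V : lmodType R[i]) := Hilbert {
  ip : V -> V -> R[i];
  ip_linear : forall (a : R[i]) (x y z : V), ip (a *: x + y) z = a * ip x z + ip y z;
  ip_conj : forall x y : V, ip y x = (ip x y)^*;
  ip_ge0 : forall x : V, 0 <= ip x x;
  ip_eq0 : forall x : V, ip x x = 0 -> x = 0;
  ip_complete : forall u : nat -> V,
    (forall e : R[i], 0 < e -> exists N : nat, forall m n : nat, (N <= m)%N -> (N <= n)%N ->
        sqrtC (ip (u m - u n) (u m - u n)) < e) ->
    exists l : V, forall e : R[i], 0 < e -> exists N : nat, forall n : nat, (N <= n)%N ->
        sqrtC (ip (u n - l) (u n - l)) < e
}.

Section Ops.
Variables (R : realType) (V : lmodType R[i]) (H : hilbert V).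

Definition hnorm (x : V) : R[i] := sqrtC (ip H x x).

Definition bounded_op (T : V -> V) : Prop :=
  (forall (a : R[i]) (x y : V), T (a *: x + y) = a *: T x + T y) /\
  exists M : R[i], 0 <= M /\ forall x : V, hnorm (T x) <= M * hnorm x.

Definition is_adjoint (T Ts : V -> V) : Prop :=
  bounded_op Ts /\ forall x y : V, ip H (T x) y = ip H x (Ts y).

Definition positive_op (A : V -> V) : Prop :=
  bounded_op A /\ forall x : V, 0 <= ip H (A x) x.

Definition is_sqrt_op (A Rt : V -> V) : Prop :=
  positive_op Rt /\ forall x : V, Rt (Rt x) = A x.

Definition range_sub (F G : V -> V) : Prop := forall x : V, exists y : V, F x = G y.

Definition nonzero_op (T : V -> V) : Prop := exists x : V, T x <> 0.

(* X \in B_{A^{1/2}}(H), where Rt = A^{1/2}: R(X^* A^{1/2}) \subset R(A^{1/2}) *)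
Definition in_BA (Rt X : V -> V) : Prop :=
  bounded_op X /\ exists Xs : V -> V, is_adjoint X Xs /\ range_sub (fun x => Xs (Rt x)) Rt.

Definition A_invertible (A Rt T : V -> V) : Prop :=
  nonzero_op T /\
  exists S : V -> V, in_BA Rt S /\ nonzero_op S /\
    (forall x, A (T (S x)) = A x) /\ (forall x, A (S (T x)) = A x).

End Ops.

(* Main.v *)
Require Import Defs.
From mathcomp Require Import all_boot all_algebra.
From mathcomp Require Import reals complex.
From mathcomp Require Import ring.
Import GRing.Theory Num.Theory.
Local Open Scope ring_scope.
Local Open Scope complex_scope.

Section Aux.
Variables (R : realType) (V : lmodType R[i]) (H : hilbert V).

Lemma ge0_conj (c : R[i]) : 0 <= c -> c^* = c.
Proof. move=> /ger0_Im; case: c => a b /= ->; by rewrite oppr0. Qed.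

Lemma conj_i : ('i : R[i])^* = - 'i.
Proof. by apply/eqP; rewrite eq_complex /= oppr0 !eqxx. Qed.

Lemma lin0 (T : V -> V) : (forall a x y, T (a *: x + y) = a *: T x + T y) -> T 0 = 0.
Proof.
move=> L; have := L 1 0 0; rewrite scaler0 addr0 scale1r => h.
by apply: (addrI (T 0)); rewrite addr0 -h.
Qed.

Lemma linD (T : V -> V) : (forall a x y, T (a *: x + y) = a *: T x + T y) ->
  forall x y, T (x + y) = T x + T y.
Proof. by move=> L x y; have := L 1 x y; rewrite !scale1r. Qed.

Lemma linB (T : V -> V) : (forall a x y, T (a *: x + y) = a *: T x + T y) ->
  forall x y, T (x - y) = T x - T y.
Proof. by move=> L x y; have := L (-1) y x; rewrite !scaleN1r ![_ + x]addrC ![_ + T x]addrC. Qed.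

Lemma ipZDl a x y z : ip H (a *: x + y) z = a * ip H x z + ip H y z.
Proof. exact: ip_linear. Qed.

Lemma ipZDr a x y z : ip H z (a *: x + y) = a^* * ip H z x + ip H z y.
Proof. by rewrite ip_conj ipZDl rmorphD rmorphM /= -!ip_conj. Qed.

Lemma ip0l z : ip H 0 z = 0.
Proof.
have := ipZDl 1 0 0 z; rewrite scaler0 addr0 mul1r => h.
by apply: (addrI (ip H 0 z)); rewrite addr0 -h.
Qed.

Lemma ip0r z : ip H z 0 = 0.
Proof. by rewrite ip_conj ip0l conjc0. Qed.

Lemma pos_sa (B : V -> V) : positive_op H B -> forall x y, ip H (B x) y = ip H x (B y).
Proof.
move=> [[L _] P].
pose h x y := ip H (B x) y - ip H x (B y).
have hd v : h v v = 0.
  rewrite /h [ip H v (B v)]ip_conj ge0_conj ?subrr //.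
have hl a x y z : h (a *: x + y) z = a * h x z + h y z.
  rewrite /h L !ipZDl; ring.
have hr a x y z : h z (a *: x + y) = a^* * h z x + h z y.
  rewrite /h L !ipZDr; ring.
move=> x y.
have e1 : h x y + h y x = 0.
  have := hd (1 *: x + y); rewrite hl !hr !hd (rmorph1 conjc).
  move=> e; rewrite -e; ring.
have e2 : - 'i * h x y + 'i * h y x = 0.
  have := hd ('i *: y + x); rewrite hl !hr !hd conjCi.
  move=> e; rewrite -e; ring.
have : (2 * 'i) * h x y = 0.
  have -> : (2 * 'i) * h x y = 'i * (h x y + h y x) - (- 'i * h x y + 'i * h y x) by ring.
  by rewrite e1 e2 mulr0 subr0.
move/eqP; rewrite !mulf_eq0 pnatr_eq0 /= => /orP [/eqP hi|/eqP]; last first.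
  by move/eqP; rewrite subr_eq0 => /eqP.
by move: hi; move/eqP; rewrite eq_complex /= oner_eq0 andbF.
Qed.

Variables (A Rt : V -> V).
Hypothesis (hA : positive_op H A) (hR : is_sqrt_op H A Rt).

Lemma my_kerA z : A z = 0 -> Rt z = 0.
Proof.
move=> Az; case: hR => hRp hRR; apply: (@ip_eq0 _ _ H).
by rewrite pos_sa // hRR Az ip0r.
Qed.

Lemma my_kerpres X z : in_BA H Rt X -> A z = 0 -> A (X z) = 0.
Proof.
move=> [hX [Xs [[_ hadj] hran]]] Az.
have Rz := my_kerA z Az.
case: hR => hRp hRR.
have : Rt (X z) = 0.
  apply: (@ip_eq0 _ _ H).
  rewrite (pos_sa Rt hRp) hadj; case: (hran (Rt (X z))) => w ->.
  by rewrite -(pos_sa Rt hRp) Rz ip0l.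
by rewrite -hRR => ->; rewrite (lin0 _ hRp.1.1).
Qed.

End Aux.
Arguments my_kerpres {R V H A Rt} hR {X z}.

Theorem mainTheorem13 (R : realType) (V : lmodType R[i]) (H : hilbert V)
  (A Rt T : V -> V) :
  positive_op H A -> nonzero_op A -> is_sqrt_op H A Rt ->
  in_BA H Rt T ->
  (A_invertible H A Rt T <->
   exists S1 S2 : V -> V, in_BA H Rt S1 /\ in_BA H Rt S2 /\
     (forall x, A (T (S1 x)) = A x) /\ (forall x, A (S2 (T x)) = A x)).
Proof.
move=> hA [x0 hx0] hR hT; split.
  by move=> [_ [S [hS [_ [h1 h2]]]]]; exists S, S.
move=> [S1 [S2 [h1 [h2 [e1 e2]]]]].
have LA := hA.1.1.
have LT := hT.1.1.
have L1 := h1.1.1.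
have L2 := h2.1.1.
have eS x : A (S1 x) = A (S2 x).
  rewrite -e2; apply/eqP; rewrite -subr_eq0 -(linB _ _ _ LA) -(linB _ _ _ L2); apply/eqP.
  apply: (my_kerpres hR h2); by rewrite (linB _ _ _ LA) e1 subrr.
split.
  exists x0 => Tx0; apply: hx0; rewrite -e2 Tx0 (lin0 _ _ _ L2) (lin0 _ _ _ LA) //.
exists S2; split => //; split.
  exists (T x0) => Sx; apply: hx0; rewrite -e2 Sx (lin0 _ _ _ LA) //.
split => // x.
rewrite -[RHS]e1; apply/eqP; rewrite -subr_eq0 -(linB _ _ _ LA) -(linB _ _ _ LT); apply/eqP.
apply: (my_kerpres hR hT); by rewrite (linB _ _ _ LA) eS subrr.
Qed.
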